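(* Let $\mathfrak{g}$ be any Lie algebra whose bracket, in a basis $\{X_0,\dots,X_7\}$, is given by the family $F_8$ below with $a_1=0$ (i.e. $\mathfrak{g}\in Fil_8(1)$). Then $\mathfrak{g}$ is not rigid in $\mathcal{F}il_8$, not rigid in $\mathcal{N}il_8$, and not rigid in $\mathcal{L}ie_8$; i.e. its $GL(8,\mathbb{K})$-orbit is not Zariski open in any of these three varieties.
   Context: $\mathbb{K}$ is algebraically closed of characteristic $0$. $\mathcal{L}ie_8$ is the affine algebraic variety of all Lie brackets on $\mathbb{K}^8$ (tuples of structure constants $C_{ij}^k$ satisfying skew-symmetry and the Jacobi identity), with $GL(8,\mathbb{K})$ acting by change of basis; $\mathcal{N}il_8\subset\mathcal{L}ie_8$ is the subvariety of nilpotent brackets and $\mathcal{F}il_8$ the (Zariski open in $\mathcal{N}il_8$) subset of filiform brackets (nilpotent of nilindex $7$). A Lie bracket is rigid in a $GL$-stable subset $S$ if its orbit is Zariski open in $S$. The family $F_8$ (parameters $a_1,a_2,a_4,a_5,a_6,a_7,a_8\in\mathbb{K}$ with $a_1(5a_4+2a_2)=0$): $\mu(X_0,X_i)=X_{i+1}$ ($1\le i\le 6$), $\mu(X_2,X_5)=a_1X_7$, $\mu(X_1,X_5)=a_1X_6+a_2X_7$, $\mu(X_3,X_4)=-a_1X_7$, $\mu(X_2,X_4)=a_4X_7$, $\mu(X_1,X_4)=a_1X_5+(a_2+a_4)X_6+a_5X_7$, $\mu(X_2,X_3)=a_4X_6+a_6X_7$, $\mu(X_1,X_3)=a_1X_4+(a_2+2a_4)X_5+(a_5+a_6)X_6+a_7X_7$,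 $\mu(X_1,X_2)=a_1X_3+(a_2+2a_4)X_4+(a_5+a_6)X_5+a_7X_6+a_8X_7$, all other brackets $\mu(X_i,X_j)$, $i<j$, being zero. Every 8-dimensional filiform Lie algebra is isomorphic to a member of $F_8$. $Fil_8(1)$ denotes the members with $a_1=0$, $Fil_8(2)$ those with $5a_4+2a_2=0$, and $\mathcal{F}il_8(k)$ the union of $GL(8,\mathbb{K})$-orbits of $Fil_8(k)$. *)

(* Defs.v *)
From HB Require Import structures.
From mathcomp Require Import all_boot all_order all_algebra.
Set Implicit Arguments. Unset Strict Implicit. Unset Printing Implicit Defensive.
Import Order.TTheory GRing.Theory Num.Theory.
Local Open Scope ring_scope.

(* A point of the ambient affine space K^(n^3): a tuple of structure
   constants, C i j k = C_{ij}^k, i.e. [X_i, X_j] = \sum_k C i j k X_k. *)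
Definition sconst (K : Type) (n : nat) := 'I_n -> 'I_n -> 'I_n -> K.

Inductive zpoly (K V : Type) : Type :=
| ZC of K
| ZX of V
| ZAdd of zpoly K V & zpoly K V
| ZMul of zpoly K V & zpoly K V.

Fixpoint zeval (K : nzRingType) (V : Type) (x : V -> K) (p : zpoly K V) : K :=
  match p with
  | ZC c => c
  | ZX v => x v
  | ZAdd p q => zeval x p + zeval x q
  | ZMul p q => zeval x p * zeval x q
  end.

Definition coords (K : Type) (n : nat) (C : sconst K n) (v : 'I_n * 'I_n * 'I_n) : K :=
  C v.1.1 v.1.2 v.2.

(* O is Zariski open in S (subspace topology of the Zariski topology on
   K^(n^3)): O is contained in S and O = S \cap U for U the complement of
   the common zero set of some set P of polynomials. *)
Definition zopen_in (K : nzRingType) (n : nat) (S O : sconst K n -> Prop) : Prop :=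
  (forall C, O C -> S C) /\
  exists P : zpoly K ('I_n * 'I_n * 'I_n) -> Prop,
    forall C, S C -> (O C <-> exists p, P p /\ zeval (coords C) p <> 0).

Definition br (K : nzRingType) (n : nat) (C : sconst K n) (x y : 'rV[K]_n) : 'rV[K]_n :=
  \row_k \sum_(i < n) \sum_(j < n) x 0 i * y 0 j * C i j k.

Definition evec (K : nzRingType) (n : nat) (i : 'I_n) : 'rV[K]_n := delta_mx 0 i.

(* Change of basis action of g in GL(n,K): (g.mu)(x,y) = g mu(g^-1 x, g^-1 y),
   where g acts on row vectors by right multiplication. *)
Definition act (K : fieldType) (n : nat) (g : 'M[K]_n) (C : sconst K n) : sconst K n :=
  fun i j k => (br C (evec K i *m invmx g) (evec K j *m invmx g) *m g) 0 k.

Definition orbit (K : fieldType) (n : nat) (C0 : sconst K n) (C : sconst K n) : Prop :=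
  exists g : 'M[K]_n, g \in unitmx /\ forall i j k, act g C0 i j k = C i j k.

Definition Lie_var (K : nzRingType) (n : nat) (C : sconst K n) : Prop :=
  (forall i j k, C i j k = - C j i k) /\
  (forall i j k m, \sum_(l < n) (C i j l * C l k m + C j k l * C l i m + C k i l * C l j m) = 0).

(* Lower central series: lcs C 0 = g, lcs C (k+1) = [g, lcs C k],
   represented as row spaces of square matrices. *)
Fixpoint lcs (K : fieldType) (n : nat) (C : sconst K n) (k : nat) : 'M[K]_n :=
  match k with
  | 0 => 1%:M
  | k.+1 => (\sum_(i < n) \sum_(r < n) <<br C (evec K i) (row r (lcs C k))>>)%MS
  end.

Definition Nil_var (K : fieldType) (n : nat) (C : sconst K n) : Prop :=
  Lie_var C /\ exists k, lcs C k = 0.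

Definition nilindex (K : fieldType) (n : nat) (C : sconst K n) (p : nat) : Prop :=
  lcs C p = 0 /\ lcs C p.-1 <> 0.

Definition Fil_var (K : fieldType) (n : nat) (C : sconst K n) : Prop :=
  Nil_var C /\ nilindex C n.-1.

Definition rigid_in (K : fieldType) (n : nat) (S : sconst K n -> Prop) (C : sconst K n) : Prop :=
  zopen_in S (orbit C).

(* The family F_8: coefficient of X_k in mu(X_i, X_j) for i < j. *)
Definition F8up (K : nzRingType) (a1 a2 a4 a5 a6 a7 a8 : K) (i j k : nat) : K :=
  match i, j, k with
  | 0, j, k => if (1 <= j <= 6)%N && (k == j.+1)%N then 1 else 0
  | 2, 5, 7 => a1
  | 1, 5, 6 => a1
  | 1, 5, 7 => a2
  | 3, 4, 7 => - a1
  | 2, 4, 7 => a4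
  | 1, 4, 5 => a1
  | 1, 4, 6 => a2 + a4
  | 1, 4, 7 => a5
  | 2, 3, 6 => a4
  | 2, 3, 7 => a6
  | 1, 3, 4 => a1
  | 1, 3, 5 => a2 + 2 * a4
  | 1, 3, 6 => a5 + a6
  | 1, 3, 7 => a7
  | 1, 2, 3 => a1
  | 1, 2, 4 => a2 + 2 * a4
  | 1, 2, 5 => a5 + a6
  | 1, 2, 6 => a7
  | 1, 2, 7 => a8
  | _, _, _ => 0
  end.

Definition F8 (K : nzRingType) (a1 a2 a4 a5 a6 a7 a8 : K) : sconst K 8 :=
  fun i j k =>
    if (i < j)%N then F8up a1 a2 a4 a5 a6 a7 a8 i j k
    else if (j < i)%N then - F8up a1 a2 a4 a5 a6 a7 a8 j i k
    else 0.

(* Main.v *)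
Require Import Defs.
From HB Require Import structures.
From mathcomp Require Import all_boot all_order all_algebra.
From mathcomp Require Import ring.
Import GRing.Theory.
Local Open Scope ring_scope.
Set Implicit Arguments. Unset Strict Implicit. Unset Printing Implicit Defensive.
Local Notation o n := (@Ordinal 8 n isT).


Section Gen.
Variable K : nzRingType.

Lemma sum8 (F : 'I_8 -> K) : \sum_(i<8) F i =
  F (o 0) + F (o 1) + F (o 2) + F (o 3) + F (o 4) + F (o 5) + F (o 6) + F (o 7).
Proof.
rewrite !big_ord_recr big_ord0 /= add0r.
by do ! congr (_ + _); congr F; apply: val_inj.
Qed.

Lemma ord8_ind (P : 'I_8 -> Prop) :
  P (o 0) -> P (o 1) -> P (o 2) -> P (o 3) ->
  P (o 4) -> P (o 5) -> P (o 6) -> P (o 7) ->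
  forall i, P i.
Proof.
move=> H0 H1 H2 H3 H4 H5 H6 H7 [[|[|[|[|[|[|[|[|n]]]]]]]]] Hn;
  try by rewrite (bool_irrelevance Hn isT).
by [].
Qed.

Lemma F8_skew (a1 a2 a4 a5 a6 a7 a8 : K) (i j k : 'I_8) :
  F8 a1 a2 a4 a5 a6 a7 a8 i j k = - F8 a1 a2 a4 a5 a6 a7 a8 j i k.
Proof.
rewrite /F8; case: (ltngtP i j) => H.
- by rewrite opprK.
- by [].
- by rewrite oppr0.
Qed.

Lemma F8_diag (a1 a2 a4 a5 a6 a7 a8 : K) (i k : 'I_8) :
  F8 a1 a2 a4 a5 a6 a7 a8 i i k = 0.
Proof. by rewrite /F8 ltnn. Qed.

Lemma F8_van (a2 a4 a5 a6 a7 a8 : K) (i j m : 'I_8) :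
  (m <= j)%N -> F8 0 a2 a4 a5 a6 a7 a8 i j m = 0.
Proof.
move: i j m; apply: ord8_ind; apply: ord8_ind; apply: ord8_ind => //= _;
  by rewrite /F8 /= ?oppr0.
Qed.

Lemma F8_van1 (a2 a4 a5 a6 a7 a8 : K) (i j m : 'I_8) :
  (m <= 1)%N -> F8 0 a2 a4 a5 a6 a7 a8 i j m = 0.
Proof.
move: i j m; apply: ord8_ind; apply: ord8_ind; apply: ord8_ind => //= _;
  by rewrite /F8 /= ?oppr0.
Qed.

End Gen.


Section Lie.
Variable K : comNzRingType.

Definition Jac (C : sconst K 8) i j k m :=
  \sum_(l < 8) (C i j l * C l k m + C j k l * C l i m + C k i l * C l j m).

Lemma Jcyc C i j k m : Jac C i j k m = Jac C j k i m.
Proof. by apply: eq_bigr => l _; ring. Qed.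

Lemma Jswap C (sk : forall i j k, C i j k = - C j i k) i j k m :
  Jac C j i k m = - Jac C i j k m.
Proof.
rewrite /Jac -sumrN; apply: eq_bigr => l _.
rewrite (sk j i l) (sk i k l) (sk k j l); ring.
Qed.

Lemma Jdiag C (sk : forall i j k, C i j k = - C j i k) (dg : forall i k, C i i k = 0) i k m :
  Jac C i i k m = 0.
Proof.
rewrite /Jac big1 // => l _; rewrite dg (sk k i l); ring.
Qed.

Lemma Jac_sorted (b2 b4 b5 b6 b7 b8 : K) : forall i j k m : 'I_8, (i < j)%N -> (j < k)%N ->
  Jac (F8 0 b2 b4 b5 b6 b7 b8) i j k m = 0.
Proof.
apply: ord8_ind; apply: ord8_ind; apply: ord8_ind; try done;
apply: ord8_ind => _ _; rewrite /Jac sum8 /F8 /=; ring.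
Qed.

Lemma Lie_F8 (b2 b4 b5 b6 b7 b8 : K) : Lie_var (F8 0 b2 b4 b5 b6 b7 b8).
Proof.
split; first exact: F8_skew.
move=> i j k m.
have sk := @F8_skew K 0 b2 b4 b5 b6 b7 b8.
have dg := @F8_diag K 0 b2 b4 b5 b6 b7 b8.
have Hs := @Jac_sorted b2 b4 b5 b6 b7 b8.
have Jc := Jcyc (F8 0 b2 b4 b5 b6 b7 b8).
have Js := Jswap sk.
have Jd := Jdiag sk dg.
change (Jac (F8 0 b2 b4 b5 b6 b7 b8) i j k m = 0).
case: (ltngtP i j) => [Hij|Hij|/val_inj Hij]; last by rewrite Hij Jd.
- case: (ltngtP j k) => [Hjk|Hjk|/val_inj Hjk]; last by rewrite Hjk Jc Jd.
  + exact: Hs.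
  + case: (ltngtP i k) => [Hik|Hik|/val_inj Hik]; last by rewrite Hik Jc Jc Jd.
    * by rewrite Js Jc Hs ?oppr0.
    * by rewrite Jc Jc Hs.
- case: (ltngtP j k) => [Hjk|Hjk|/val_inj Hjk]; last by rewrite Hjk Jc Jd.
  + case: (ltngtP i k) => [Hik|Hik|/val_inj Hik]; last by rewrite Hik Jc Jc Jd.
    * by rewrite Js Hs ?oppr0.
    * by rewrite Jc Hs.
  + by rewrite Js Jc Jc Hs ?oppr0.
Qed.
End Lie.


Section Lcs.
Variable K : fieldType.

Definition Mx (C : sconst K 8) (x : 'rV[K]_8) : 'M[K]_8 :=
  \matrix_(j, m) \sum_(i < 8) x 0 i * C i j m.

Lemma br_mul C x v : br C x v = v *m Mx C x.
Proof.
apply/rowP => m; rewrite !mxE; rewrite exchange_big /=.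
apply: eq_bigr => j _; rewrite mxE mulr_sumr; apply: eq_bigr => i _.
by rewrite mulrCA mulrA.
Qed.

Lemma br_sub C x (A : 'M[K]_8) v : (v <= A)%MS ->
  (br C x v <= \sum_(r < 8) <<br C x (row r A)>>)%MS.
Proof.
case/submxP => D ->; rewrite br_mul -mulmxA.
apply: submx_trans (submxMl _ _) _.
apply/row_subP => r; rewrite row_mul -br_mul.
by apply: (sumsmx_sup r) => //; rewrite genmxE.
Qed.

Lemma lcs_step C k u : (u <= lcs C k)%MS -> (br C (evec K (o 0)) u <= lcs C k.+1)%MS.
Proof.
move=> H; rewrite /=; apply: (sumsmx_sup (o 0)) => //.
exact: br_sub.
Qed.

Definition dg (k : nat) : 'M[K]_8 := diag_mx (\row_(j < 8) ((k < j)%N)%:R).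

Lemma sub_dg k (v : 'rV[K]_8) : (v <= dg k)%MS -> forall j : 'I_8, (j <= k)%N -> v 0 j = 0.
Proof.
case/submxP => D -> j Hj; rewrite /dg mul_mx_diag !mxE.
by rewrite ltnNge Hj mulr0.
Qed.

Lemma dg_sub k (v : 'rV[K]_8) : (forall j : 'I_8, (j <= k)%N -> v 0 j = 0) -> (v <= dg k)%MS.
Proof.
move=> H; have -> : v = v *m dg k.
  apply/rowP => j; rewrite /dg mul_mx_diag !mxE.
  case: (leqP j k) => Hj; first by rewrite H // mul0r.
  by rewrite mulr1.
exact: submxMl.
Qed.

Lemma br_van (C : sconst K 8) k (cv : forall i j m : 'I_8, (m <= j)%N -> C i j m = 0) (u v : 'rV[K]_8) :
  (forall j : 'I_8, (j <= k)%N -> v 0 j = 0) ->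
  forall m : 'I_8, (m <= k.+1)%N -> br C u v 0 m = 0.
Proof.
move=> Hv m Hm; rewrite mxE; apply: big1 => i _; apply: big1 => j _.
case: (leqP j k) => Hj; first by rewrite Hv // mulr0 mul0r.
by rewrite cv ?mulr0 // (leq_trans Hm Hj).
Qed.

Lemma lcs_up (C : sconst K 8) (cv : forall i j m : 'I_8, (m <= j)%N -> C i j m = 0)
  (cv1 : forall i j m : 'I_8, (m <= 1)%N -> C i j m = 0) k :
  (lcs C k.+1 <= dg k.+1)%MS.
Proof.
elim: k => [|k IH].
  rewrite /=; apply/sumsmx_subP => i _; apply/sumsmx_subP => r _; rewrite genmxE.
  by apply: dg_sub => j Hj; rewrite mxE; apply: big1 => a _; apply: big1 => b _; rewrite cv1 ?mulr0.
rewrite [lcs C k.+2]/=; apply/sumsmx_subP => i _; apply/sumsmx_subP => r _; rewrite genmxE.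
apply: dg_sub; apply: (br_van cv).
by apply: sub_dg; apply: submx_trans IH; apply: row_sub.
Qed.

Lemma dg7 : dg 7 = 0.
Proof.
apply/matrixP => i j; rewrite /dg !mxE.
by rewrite ltnNge -ltnS ltn_ord /= mulr0n mul0rn.
Qed.

Lemma br_evec (C : sconst K 8) (i j : 'I_8) : br C (evec K i) (evec K j) = \row_k C i j k.
Proof.
apply/rowP => k; rewrite !mxE (bigD1 i) //= [X in _ + X]big1; last first.
  move=> a Ha; apply: big1 => b _; rewrite !mxE (negbTE Ha) /= !mul0r //.
rewrite addr0 (bigD1 j) //= [X in _ + X]big1; last first.
  by move=> b Hb; rewrite !mxE (negbTE Hb) /= !mulr0 mul0r.
by rewrite !mxE !eqxx /= mul1r mul1r addr0.
Qed.

End Lcs.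


Section Fil.
Variable K : fieldType.
Variables b2 b4 b5 b6 b7 b8 : K.
Let Cb := F8 0 b2 b4 b5 b6 b7 b8.

Lemma evec_step (i : 'I_8) (j : 'I_8) : (1 <= i <= 6)%N -> (j == i.+1 :> nat) ->
  br Cb (evec K (o 0)) (evec K i) = evec K j.
Proof.
move=> Hi Hj; rewrite br_evec; apply/rowP => k; rewrite !mxE /=.
move: i j k Hi Hj; apply: ord8_ind; apply: ord8_ind; apply: ord8_ind => //= _ _;
  by rewrite /Cb /F8 /=.
Qed.

Lemma Fil_F8 : Fil_var Cb.
Proof.
have L7 : lcs Cb 7 = 0.
  apply/eqP; rewrite -submx0 -(dg7 K).
  exact: (lcs_up (@F8_van _ _ _ _ _ _ _) (@F8_van1 _ _ _ _ _ _ _) 6).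
split; first by split; [exact: Lie_F8 | exists 7].
split => // L6; have {}L6 : lcs Cb 6 = 0 := L6.
have H1 : (evec K (o 1) <= lcs Cb 0)%MS by exact: submx1.
have H2 := lcs_step H1; rewrite (@evec_step (o 1) (o 2)) // in H2.
have H3 := lcs_step H2; rewrite (@evec_step (o 2) (o 3)) // in H3.
have H4 := lcs_step H3; rewrite (@evec_step (o 3) (o 4)) // in H4.
have H5 := lcs_step H4; rewrite (@evec_step (o 4) (o 5)) // in H5.
have H6 := lcs_step H5; rewrite (@evec_step (o 5) (o 6)) // in H6.
have H7 := lcs_step H6; rewrite (@evec_step (o 6) (o 7)) // in H7.
move: H7; rewrite L6 submx0 => /eqP /rowP /(_ (o 7)); rewrite !mxE /=.
by move/eqP; rewrite oner_eq0.
Qed.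

Lemma Nil_F8 : Nil_var Cb.
Proof. by case: Fil_F8. Qed.

End Fil.


Section Orb.
Variable K : fieldType.

Lemma act_eq (g : 'M[K]_8) (C0 : sconst K 8) : g \in unitmx -> forall i j m,
  \sum_k act g C0 i j k * invmx g k m = \sum_a \sum_b invmx g i a * invmx g j b * C0 a b m.
Proof.
move=> Hg i j m.
have -> : \sum_k act g C0 i j k * invmx g k m = ((\row_k act g C0 i j k) *m invmx g) 0 m.
  by rewrite mxE; apply: eq_bigr => k _; rewrite mxE.
have -> : (\row_k act g C0 i j k) = br C0 (evec K i *m invmx g) (evec K j *m invmx g) *m g.
  by apply/rowP => k; rewrite mxE.
rewrite -mulmxA mulmxV // mulmx1 mxE; apply: eq_bigr => a _; apply: eq_bigr => b _.
by rewrite /evec -!rowE !mxE.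
Qed.

Lemma orbit_inv (a2 a4 a5 a6 a7 a8 b2 b4 b5 b6 b7 b8 : K) :
  Defs.orbit (F8 0 a2 a4 a5 a6 a7 a8) (F8 0 b2 b4 b5 b6 b7 b8) ->
  exists l, b2 = l * a2 /\ b4 = l * a4.
Proof.
case=> g [Hg Hact].
pose h := invmx g.
have E : forall i j m, \sum_k F8 0 b2 b4 b5 b6 b7 b8 i j k * h k m =
   \sum_a \sum_b h i a * h j b * F8 0 a2 a4 a5 a6 a7 a8 a b m.
  move=> i j m; rewrite -(act_eq _ Hg); apply: eq_bigr => k _; by rewrite Hact.
have z20 : h (o 2) (o 0) = 0.
  have HE := E (o 0) (o 1) (o 0); rewrite !sum8 /F8 /= in HE; refine (etrans _ (etrans HE _)); ring.
have z21 : h (o 2) (o 1) = 0.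
  have HE := E (o 0) (o 1) (o 1); rewrite !sum8 /F8 /= in HE; rewrite ?z20 in HE; refine (etrans _ (etrans HE _)); ring.
have z30 : h (o 3) (o 0) = 0.
  have HE := E (o 0) (o 2) (o 0); rewrite !sum8 /F8 /= in HE; rewrite ?z20 ?z21 in HE; refine (etrans _ (etrans HE _)); ring.
have z31 : h (o 3) (o 1) = 0.
  have HE := E (o 0) (o 2) (o 1); rewrite !sum8 /F8 /= in HE; rewrite ?z20 ?z21 ?z30 in HE; refine (etrans _ (etrans HE _)); ring.
have z32 : h (o 3) (o 2) = 0.
  have HE := E (o 0) (o 2) (o 2); rewrite !sum8 /F8 /= in HE; rewrite ?z20 ?z21 ?z30 ?z31 in HE; refine (etrans _ (etrans HE _)); ring.
have z40 : h (o 4) (o 0) = 0.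
  have HE := E (o 0) (o 3) (o 0); rewrite !sum8 /F8 /= in HE; rewrite ?z20 ?z21 ?z30 ?z31 ?z32 in HE; refine (etrans _ (etrans HE _)); ring.
have z41 : h (o 4) (o 1) = 0.
  have HE := E (o 0) (o 3) (o 1); rewrite !sum8 /F8 /= in HE; rewrite ?z20 ?z21 ?z30 ?z31 ?z32 ?z40 in HE; refine (etrans _ (etrans HE _)); ring.
have z42 : h (o 4) (o 2) = 0.
  have HE := E (o 0) (o 3) (o 2); rewrite !sum8 /F8 /= in HE; rewrite ?z20 ?z21 ?z30 ?z31 ?z32 ?z40 ?z41 in HE; refine (etrans _ (etrans HE _)); ring.
have z43 : h (o 4) (o 3) = 0.
  have HE := E (o 0) (o 3) (o 3); rewrite !sum8 /F8 /= in HE; rewrite ?z20 ?z21 ?z30 ?z31 ?z32 ?z40 ?z41 ?z42 in HE; refine (etrans _ (etrans HE _)); ring.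
have z50 : h (o 5) (o 0) = 0.
  have HE := E (o 0) (o 4) (o 0); rewrite !sum8 /F8 /= in HE; rewrite ?z20 ?z21 ?z30 ?z31 ?z32 ?z40 ?z41 ?z42 ?z43 in HE; refine (etrans _ (etrans HE _)); ring.
have z51 : h (o 5) (o 1) = 0.
  have HE := E (o 0) (o 4) (o 1); rewrite !sum8 /F8 /= in HE; rewrite ?z20 ?z21 ?z30 ?z31 ?z32 ?z40 ?z41 ?z42 ?z43 ?z50 in HE; refine (etrans _ (etrans HE _)); ring.
have z52 : h (o 5) (o 2) = 0.
  have HE := E (o 0) (o 4) (o 2); rewrite !sum8 /F8 /= in HE; rewrite ?z20 ?z21 ?z30 ?z31 ?z32 ?z40 ?z41 ?z42 ?z43 ?z50 ?z51 in HE; refine (etrans _ (etrans HE _)); ring.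
have z53 : h (o 5) (o 3) = 0.
  have HE := E (o 0) (o 4) (o 3); rewrite !sum8 /F8 /= in HE; rewrite ?z20 ?z21 ?z30 ?z31 ?z32 ?z40 ?z41 ?z42 ?z43 ?z50 ?z51 ?z52 in HE; refine (etrans _ (etrans HE _)); ring.
have z54 : h (o 5) (o 4) = 0.
  have HE := E (o 0) (o 4) (o 4); rewrite !sum8 /F8 /= in HE; rewrite ?z20 ?z21 ?z30 ?z31 ?z32 ?z40 ?z41 ?z42 ?z43 ?z50 ?z51 ?z52 ?z53 in HE; refine (etrans _ (etrans HE _)); ring.
have z60 : h (o 6) (o 0) = 0.
  have HE := E (o 0) (o 5) (o 0); rewrite !sum8 /F8 /= in HE; rewrite ?z20 ?z21 ?z30 ?z31 ?z32 ?z40 ?z41 ?z42 ?z43 ?z50 ?z51 ?z52 ?z53 ?z54 in HE; refine (etrans _ (etrans HE _)); ring.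
have z61 : h (o 6) (o 1) = 0.
  have HE := E (o 0) (o 5) (o 1); rewrite !sum8 /F8 /= in HE; rewrite ?z20 ?z21 ?z30 ?z31 ?z32 ?z40 ?z41 ?z42 ?z43 ?z50 ?z51 ?z52 ?z53 ?z54 ?z60 in HE; refine (etrans _ (etrans HE _)); ring.
have z62 : h (o 6) (o 2) = 0.
  have HE := E (o 0) (o 5) (o 2); rewrite !sum8 /F8 /= in HE; rewrite ?z20 ?z21 ?z30 ?z31 ?z32 ?z40 ?z41 ?z42 ?z43 ?z50 ?z51 ?z52 ?z53 ?z54 ?z60 ?z61 in HE; refine (etrans _ (etrans HE _)); ring.
have z63 : h (o 6) (o 3) = 0.
  have HE := E (o 0) (o 5) (o 3); rewrite !sum8 /F8 /= in HE; rewrite ?z20 ?z21 ?z30 ?z31 ?z32 ?z40 ?z41 ?z42 ?z43 ?z50 ?z51 ?z52 ?z53 ?z54 ?z60 ?z61 ?z62 in HE; refine (etrans _ (etrans HE _)); ring.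
have z64 : h (o 6) (o 4) = 0.
  have HE := E (o 0) (o 5) (o 4); rewrite !sum8 /F8 /= in HE; rewrite ?z20 ?z21 ?z30 ?z31 ?z32 ?z40 ?z41 ?z42 ?z43 ?z50 ?z51 ?z52 ?z53 ?z54 ?z60 ?z61 ?z62 ?z63 in HE; refine (etrans _ (etrans HE _)); ring.
have z65 : h (o 6) (o 5) = 0.
  have HE := E (o 0) (o 5) (o 5); rewrite !sum8 /F8 /= in HE; rewrite ?z20 ?z21 ?z30 ?z31 ?z32 ?z40 ?z41 ?z42 ?z43 ?z50 ?z51 ?z52 ?z53 ?z54 ?z60 ?z61 ?z62 ?z63 ?z64 in HE; refine (etrans _ (etrans HE _)); ring.
have z70 : h (o 7) (o 0) = 0.
  have HE := E (o 0) (o 6) (o 0); rewrite !sum8 /F8 /= in HE; rewrite ?z20 ?z21 ?z30 ?z31 ?z32 ?z40 ?z41 ?z42 ?z43 ?z50 ?z51 ?z52 ?z53 ?z54 ?z60 ?z61 ?z62 ?z63 ?z64 ?z65 in HE; refine (etrans _ (etrans HE _)); ring.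
have z71 : h (o 7) (o 1) = 0.
  have HE := E (o 0) (o 6) (o 1); rewrite !sum8 /F8 /= in HE; rewrite ?z20 ?z21 ?z30 ?z31 ?z32 ?z40 ?z41 ?z42 ?z43 ?z50 ?z51 ?z52 ?z53 ?z54 ?z60 ?z61 ?z62 ?z63 ?z64 ?z65 ?z70 in HE; refine (etrans _ (etrans HE _)); ring.
have z72 : h (o 7) (o 2) = 0.
  have HE := E (o 0) (o 6) (o 2); rewrite !sum8 /F8 /= in HE; rewrite ?z20 ?z21 ?z30 ?z31 ?z32 ?z40 ?z41 ?z42 ?z43 ?z50 ?z51 ?z52 ?z53 ?z54 ?z60 ?z61 ?z62 ?z63 ?z64 ?z65 ?z70 ?z71 in HE; refine (etrans _ (etrans HE _)); ring.
have z73 : h (o 7) (o 3) = 0.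
  have HE := E (o 0) (o 6) (o 3); rewrite !sum8 /F8 /= in HE; rewrite ?z20 ?z21 ?z30 ?z31 ?z32 ?z40 ?z41 ?z42 ?z43 ?z50 ?z51 ?z52 ?z53 ?z54 ?z60 ?z61 ?z62 ?z63 ?z64 ?z65 ?z70 ?z71 ?z72 in HE; refine (etrans _ (etrans HE _)); ring.
have z74 : h (o 7) (o 4) = 0.
  have HE := E (o 0) (o 6) (o 4); rewrite !sum8 /F8 /= in HE; rewrite ?z20 ?z21 ?z30 ?z31 ?z32 ?z40 ?z41 ?z42 ?z43 ?z50 ?z51 ?z52 ?z53 ?z54 ?z60 ?z61 ?z62 ?z63 ?z64 ?z65 ?z70 ?z71 ?z72 ?z73 in HE; refine (etrans _ (etrans HE _)); ring.
have z75 : h (o 7) (o 5) = 0.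
  have HE := E (o 0) (o 6) (o 5); rewrite !sum8 /F8 /= in HE; rewrite ?z20 ?z21 ?z30 ?z31 ?z32 ?z40 ?z41 ?z42 ?z43 ?z50 ?z51 ?z52 ?z53 ?z54 ?z60 ?z61 ?z62 ?z63 ?z64 ?z65 ?z70 ?z71 ?z72 ?z73 ?z74 in HE; refine (etrans _ (etrans HE _)); ring.
have z76 : h (o 7) (o 6) = 0.
  have HE := E (o 0) (o 6) (o 6); rewrite !sum8 /F8 /= in HE; rewrite ?z20 ?z21 ?z30 ?z31 ?z32 ?z40 ?z41 ?z42 ?z43 ?z50 ?z51 ?z52 ?z53 ?z54 ?z60 ?z61 ?z62 ?z63 ?z64 ?z65 ?z70 ?z71 ?z72 ?z73 ?z74 ?z75 in HE; refine (etrans _ (etrans HE _)); ring.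
have d5 : h (o 5) (o 5) = h (o 0) (o 0) * h (o 4) (o 4).
  have HE := E (o 0) (o 4) (o 5); rewrite !sum8 /F8 /= in HE; rewrite ?z20 ?z21 ?z30 ?z31 ?z32 ?z40 ?z41 ?z42 ?z43 ?z50 ?z51 ?z52 ?z53 ?z54 ?z60 ?z61 ?z62 ?z63 ?z64 ?z65 ?z70 ?z71 ?z72 ?z73 ?z74 ?z75 ?z76 in HE; refine (etrans _ (etrans HE _)); ring.
have d6 : h (o 6) (o 6) = h (o 0) (o 0) * h (o 5) (o 5).
  have HE := E (o 0) (o 5) (o 6); rewrite !sum8 /F8 /= in HE; rewrite ?z20 ?z21 ?z30 ?z31 ?z32 ?z40 ?z41 ?z42 ?z43 ?z50 ?z51 ?z52 ?z53 ?z54 ?z60 ?z61 ?z62 ?z63 ?z64 ?z65 ?z70 ?z71 ?z72 ?z73 ?z74 ?z75 ?z76 in HE; refine (etrans _ (etrans HE _)); ring.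
have d7 : h (o 7) (o 7) = h (o 0) (o 0) * h (o 6) (o 6).
  have HE := E (o 0) (o 6) (o 7); rewrite !sum8 /F8 /= in HE; rewrite ?z20 ?z21 ?z30 ?z31 ?z32 ?z40 ?z41 ?z42 ?z43 ?z50 ?z51 ?z52 ?z53 ?z54 ?z60 ?z61 ?z62 ?z63 ?z64 ?z65 ?z70 ?z71 ?z72 ?z73 ?z74 ?z75 ?z76 in HE; refine (etrans _ (etrans HE _)); ring.
have c1 : h (o 1) (o 0) * h (o 6) (o 6) = 0.
  have HE := E (o 1) (o 6) (o 7); rewrite !sum8 /F8 /= in HE; rewrite ?z20 ?z21 ?z30 ?z31 ?z32 ?z40 ?z41 ?z42 ?z43 ?z50 ?z51 ?z52 ?z53 ?z54 ?z60 ?z61 ?z62 ?z63 ?z64 ?z65 ?z70 ?z71 ?z72 ?z73 ?z74 ?z75 ?z76 in HE; refine (etrans _ (etrans (esym HE) _)); ring.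
have c2 : b2 * h (o 7) (o 7) = h (o 1) (o 0) * h (o 5) (o 6) + h (o 1) (o 1) * h (o 5) (o 5) * a2.
  have HE := E (o 1) (o 5) (o 7); rewrite !sum8 /F8 /= in HE; rewrite ?z20 ?z21 ?z30 ?z31 ?z32 ?z40 ?z41 ?z42 ?z43 ?z50 ?z51 ?z52 ?z53 ?z54 ?z60 ?z61 ?z62 ?z63 ?z64 ?z65 ?z70 ?z71 ?z72 ?z73 ?z74 ?z75 ?z76 in HE; refine (etrans _ (etrans HE _)); ring.
have c3 : (b2 + b4) * h (o 6) (o 6) = h (o 1) (o 0) * h (o 4) (o 5) + h (o 1) (o 1) * h (o 4) (o 4) * (a2 + a4).
  have HE := E (o 1) (o 4) (o 6); rewrite !sum8 /F8 /= in HE; rewrite ?z20 ?z21 ?z30 ?z31 ?z32 ?z40 ?z41 ?z42 ?z43 ?z50 ?z51 ?z52 ?z53 ?z54 ?z60 ?z61 ?z62 ?z63 ?z64 ?z65 ?z70 ?z71 ?z72 ?z73 ?z74 ?z75 ?z76 in HE; refine (etrans _ (etrans HE _)); ring.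
have nz77 : h (o 7) (o 7) != 0.
  apply/eqP => H77.
  have R7 : delta_mx (0 : 'I_1) (o 7) *m h = 0.
    apply/matrixP => i0 m; rewrite ord1 -rowE !mxE.
    by move: m; apply: ord8_ind; rewrite ?z70 ?z71 ?z72 ?z73 ?z74 ?z75 ?z76 ?H77.
  have : (delta_mx (0 : 'I_1) (o 7) *m h) *m g = delta_mx (0 : 'I_1) (o 7).
    by rewrite -mulmxA mulVmx // mulmx1.
  rewrite R7 mul0mx => /(congr1 (fun M : 'M[K]_(1,8) => M 0 (o 7))); rewrite !mxE /= => /eqP.
  by rewrite eq_sym oner_eq0.
move: nz77; rewrite d7 mulf_eq0 negb_or => /andP [nz00 nz66].
move: (nz66); rewrite d6 mulf_eq0 negb_or => /andP [_ nz55].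
move: (nz55); rewrite d5 mulf_eq0 negb_or => /andP [_ nz44].
have z10 : h (o 1) (o 0) = 0.
  by move/eqP: c1; rewrite mulf_eq0 (negbTE nz66) orbF => /eqP.
exists (h (o 1) (o 1) / (h (o 0) (o 0) * h (o 0) (o 0))).
have nzs : h (o 0) (o 0) * h (o 0) (o 0) != 0 by rewrite mulf_neq0.
split.
  apply: (mulIf (x := h (o 0) (o 0) * h (o 0) (o 0) * h (o 5) (o 5))); first by rewrite mulf_neq0.
  have -> : b2 * (h (o 0) (o 0) * h (o 0) (o 0) * h (o 5) (o 5)) = b2 * h (o 7) (o 7).
    by rewrite d7 d6; ring.
  rewrite c2 z10; field; done.
apply: (mulIf (x := h (o 0) (o 0) * h (o 0) (o 0) * h (o 4) (o 4))); first by rewrite mulf_neq0.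
have E2 : b2 * (h (o 0) (o 0) * h (o 0) (o 0)) = h (o 1) (o 1) * a2.
  apply: (mulIf nz55); rewrite -[X in X = _]mulrA -[LHS]/(b2 * (h (o 0) (o 0) * h (o 0) (o 0) * h (o 5) (o 5))).
  have -> : b2 * (h (o 0) (o 0) * h (o 0) (o 0) * h (o 5) (o 5)) = b2 * h (o 7) (o 7).
    by rewrite d7 d6; ring.
  rewrite c2 z10; ring.
have E3 : (b2 + b4) * (h (o 0) (o 0) * h (o 0) (o 0) * h (o 4) (o 4)) = h (o 1) (o 1) * h (o 4) (o 4) * (a2 + a4).
  by move: c3; rewrite z10 d6 d5 mul0r add0r => <-; ring.
have -> : b4 * (h (o 0) (o 0) * h (o 0) (o 0) * h (o 4) (o 4)) =
   (b2 + b4) * (h (o 0) (o 0) * h (o 0) (o 0) * h (o 4) (o 4)) - b2 * (h (o 0) (o 0) * h (o 0) (o 0)) * h (o 4) (o 4) by ring.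
rewrite E3 E2; field; done.
Qed.
End Orb.


Lemma F8up_morph (R S : nzRingType) (f : {rmorphism R -> S}) a1 a2 a4 a5 a6 a7 a8 (i j k : nat) :
  f (F8up a1 a2 a4 a5 a6 a7 a8 i j k) = F8up (f a1) (f a2) (f a4) (f a5) (f a6) (f a7) (f a8) i j k.
Proof.
rewrite /F8up.
repeat match goal with |- context [match ?x with _ => _ end] => destruct x end;
  rewrite ?rmorph0 ?rmorph1 ?rmorphD ?rmorphN ?rmorphM ?rmorph_nat //.
Qed.

Lemma F8_morph (R S : nzRingType) (f : {rmorphism R -> S}) a1 a2 a4 a5 a6 a7 a8 (i j k : 'I_8) :
  f (F8 a1 a2 a4 a5 a6 a7 a8 i j k) = F8 (f a1) (f a2) (f a4) (f a5) (f a6) (f a7) (f a8) i j k.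
Proof.
rewrite /F8; case: ifP => _; first exact: F8up_morph.
case: ifP => _; last exact: rmorph0.
by rewrite rmorphN F8up_morph.
Qed.


Section Main.
Variable K : fieldType.
Hypothesis hK : [pchar K] =i pred0.
Variables a2 a4 a5 a6 a7 a8 : K.

Definition Ct (u v t : K) : sconst K 8 := F8 0 (a2 + t * u) (a4 + t * v) a5 a6 a7 a8.

Lemma poly_curve u v (p : zpoly K ('I_8 * 'I_8 * 'I_8)) :
  exists q : {poly K}, forall t, q.[t] = zeval (coords (Ct u v t)) p.
Proof.
elim: p => [c|w|p1 [q1 H1] p2 [q2 H2]|p1 [q1 H1] p2 [q2 H2]].
- by exists c%:P => t; rewrite hornerC.
- exists (F8 0 (a2%:P + 'X * u%:P) (a4%:P + 'X * v%:P) a5%:P a6%:P a7%:P a8%:P w.1.1 w.1.2 w.2).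
  move=> t.
  have := F8_morph (horner_eval t) 0 (a2%:P + 'X * u%:P) (a4%:P + 'X * v%:P) a5%:P a6%:P a7%:P a8%:P w.1.1 w.1.2 w.2.
  move=> H; apply: (etrans H).
  by rewrite /coords /Ct /= /horner_eval /= !hornerE.
- by exists (q1 + q2) => t; rewrite hornerD H1 H2.
- by exists (q1 * q2) => t; rewrite hornerM H1 H2.
Qed.

Lemma natr_inj8 (m n : nat) : (m%:R : K) = n%:R -> m = n.
Proof.
have key : forall m n : nat, (m <= n)%N -> (m%:R : K) = n%:R -> m = n.
  move=> {}m {}n Hmn E; have E2 : ((n - m)%:R : K) = 0.
    by apply: (addrI (m%:R)); rewrite -natrD subnKC // E addr0.
  move/eqP: E2; rewrite ((pcharf0P K).1 hK) subn_eq0 => Hnm.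
  by apply/eqP; rewrite eqn_leq Hmn Hnm.
case: (leqP m n) => H E; first exact: key.
by apply/esym/key; [apply: ltnW | ].
Qed.

Lemma exists_t (q : {poly K}) : q.[0] != 0 -> exists t, t != 0 /\ q.[t] != 0.
Proof.
move=> q0.
have qn0 : q != 0 by apply: contraNneq q0 => ->; rewrite horner0.
pose rs := [seq (n.+1)%:R : K | n <- iota 0 (size q)].
have : ~~ all (root q) rs.
  apply/negP => Hall.
  have Hu : uniq rs.
    rewrite map_inj_uniq ?iota_uniq // => m n /natr_inj8; by case.
  have := max_poly_roots qn0 Hall Hu.
  by rewrite size_map size_iota ltnn.
case/allPn => t /mapP [n _ ->] Hr.
exists (n.+1)%:R; split => //.
by rewrite ((pcharf0P K).1 hK).
Qed.

Lemma orbit_refl (C : sconst K 8) : Defs.orbit C C.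
Proof.
exists 1%:M; split; first exact: unitmx1.
by move=> i j k; rewrite /act invmx1 !mulmx1 br_evec mxE.
Qed.

Lemma notrig (S : sconst K 8 -> Prop) (HS : forall b2 b4, S (F8 0 b2 b4 a5 a6 a7 a8)) :
  ~ rigid_in S (F8 0 a2 a4 a5 a6 a7 a8).
Proof.
case=> Hsub [P HP].
have om := orbit_refl (F8 0 a2 a4 a5 a6 a7 a8).
have Smu := Hsub _ om.
case: (HP _ Smu) => /(_ om) [p [Pp nz]] _.
pose uv := if a4 == 0 then (0 : K, 1 : K) else (1, 0).
have [q Hq] := poly_curve uv.1 uv.2 p.
have q0 : q.[0] != 0.
  by rewrite Hq /Ct !mul0r !addr0; apply/eqP.
have [t [tn0 qt]] := exists_t q0.
have : Defs.orbit (F8 0 a2 a4 a5 a6 a7 a8) (Ct uv.1 uv.2 t).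
  apply/(HP _ (HS _ _)); exists p; split => //.
  by rewrite -Hq; apply/eqP.
case/orbit_inv => l [E2 E4].
move: E2 E4; rewrite /uv; case: (eqVneq a4 0) => [->|H4] /=.
  rewrite !mulr0 mulr1 add0r => _ Et; by rewrite Et eqxx in tn0.
rewrite !mulr0 mulr1 addr0 => E2 E4.
have l1 : l = 1.
  apply: (mulIf H4); by rewrite mul1r -E4.
move: E2; rewrite l1 mul1r => /eqP; rewrite -subr_eq0 addrC addKr => /eqP Et.
by rewrite Et eqxx in tn0.
Qed.
End Main.

Unset Implicit Arguments.

Theorem proposition12 (K : closedFieldType) (hK : [pchar K] =i pred0)
    (a2 a4 a5 a6 a7 a8 : K) :
  let mu := F8 0 a2 a4 a5 a6 a7 a8 in
  ~ rigid_in (@Fil_var K 8) mu /\ ~ rigid_in (@Nil_var K 8) mu /\ ~ rigid_in (@Lie_var K 8) mu.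
Proof.
move=> mu; split; [|split]; apply: (notrig hK) => b2 b4.
- exact: Fil_F8.
- exact: Nil_F8.
- exact: Lie_F8.
Qed.
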